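(* Let $\mathbb{A}\in\mathbb{C}^{n\times n}$, $\mathbf{f}_1\in\mathbb{C}^n$, $\mathbf{f}_{i+1}=\mathbb{A}\mathbf{f}_i$. Let $z_1,\dots,z_\ell\in\mathbb{C}^n$ be linearly independent, $Z_\ell=(z_1,\dots,z_\ell)=QR$ a thin QR factorization ($Q\in\mathbb{C}^{n\times\ell}$ with orthonormal columns, $R\in\mathbb{C}^{\ell\times\ell}$ upper triangular nonsingular), and let $\lambda_1,\dots,\lambda_\ell\in\mathbb{C}$. For $i=1,\dots,m$ set $\mathbf{g}_i=Q^*\mathbf{f}_i$ and $\Delta_{\Lambda_i}=\operatorname{diag}(\lambda_1^{i-1},\dots,\lambda_\ell^{i-1})$ (with $\lambda^0=1$). Let $$\vec{\mathbf{g}}=\begin{pmatrix}\mathbf{g}_1\\ \vdots\\ \mathbf{g}_m\end{pmatrix},\quad S=\begin{pmatrix}R\Delta_{\Lambda_1}\\ \vdots\\ R\Delta_{\Lambda_m}\end{pmatrix},\quad \vec{\boldsymbol\alpha}_\star=\begin{pmatrix}\Delta_{\Lambda_1}\\ \vdots\\ \Delta_{\Lambda_m}\end{pmatrix}^{\dagger}(I_m\otimes R^{-1})\vec{\mathbf{g}}.$$ Let $M=I_m\otimes(RR^* )^{-1}$ and $\|x\|_M=\sqrt{x^*Mx}$. Then $\vec{\boldsymbol\alpha}_\star$ is the minimum $\|\cdot\|_2$-norm solution of the weighted least squares problem $\min_{\vec{\boldsymbol\alpha}\in\mathbb{C}^\ell}\|\vec{\mathbf{g}}-S\vec{\bolds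ymbol\alpha}\|_M$.
   Context: $\dagger$ denotes the Moore–Penrose pseudoinverse and $\otimes$ the Kronecker product. *)

(* Defs.v *)
(* Complex numbers: an arbitrary numClosedFieldType C
   (algebraically closed field with conjugation and order, e.g. algC, or
   complex R for a real-closed R). *)
From HB Require Import structures.
From mathcomp Require Import all_boot all_order all_algebra.
From mathcomp Require Import mxtens.
From Stdlib Require Import ClassicalEpsilon.
Set Implicit Arguments. Unset Strict Implicit. Unset Printing Implicit Defensive.
Import Order.TTheory GRing.Theory Num.Theory.
Local Open Scope ring_scope.

Section Defs.
Variable C : numClosedFieldType.

Definition ctmx {p q : nat} (A : 'M[C]_(p, q)) : 'M[C]_(q, p) :=
  (map_mx Num.conj A)^T.

(* Moore-Penrose conditions and the Moore-Penrose pseudoinverse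
   (the unique matrix satisfying them, chosen by Hilbert's epsilon) *)
Definition penrose {p q : nat} (A : 'M[C]_(p, q)) (X : 'M[C]_(q, p)) : Prop :=
  [/\ A *m X *m A = A, X *m A *m X = X,
      ctmx (A *m X) = A *m X & ctmx (X *m A) = X *m A].

Definition pinv {p q : nat} (A : 'M[C]_(p, q)) : 'M[C]_(q, p) :=
  epsilon (inhabits 0) (penrose A).

(* vertical block stacking  (B_0; B_1; ...; B_{k-1}),
   indexed consistently with the Kronecker product tensmx (A *t B) *)
Definition stackmx {k p q : nat} (B : 'I_k -> 'M[C]_(p, q)) : 'M[C]_(k * p, q) :=
  \matrix_(r, c) B (mxtens_unindex r).1 (mxtens_unindex r).2 c.

Definition wnorm {p : nat} (M : 'M[C]_p) (x : 'cV[C]_p) : C :=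
  sqrtC ((ctmx x *m M *m x) 0 0).

Definition norm2 {p : nat} (x : 'cV[C]_p) : C :=
  sqrtC ((ctmx x *m x) 0 0).

Definition min_norm_wls_sol {N p : nat} (M : 'M[C]_N) (S : 'M[C]_(N, p))
    (g : 'cV[C]_N) (a : 'cV[C]_p) : Prop :=
  (forall b : 'cV[C]_p, wnorm M (g - S *m a) <= wnorm M (g - S *m b)) /\
  (forall b : 'cV[C]_p,
      (forall c : 'cV[C]_p, wnorm M (g - S *m b) <= wnorm M (g - S *m c)) ->
      norm2 a <= norm2 b).

End Defs.

(* Main.v *)
Require Import Defs.
From HB Require Import structures.
From mathcomp Require Import all_boot all_order all_algebra.
From mathcomp Require Import mxtens.
From Stdlib Require Import ClassicalEpsilon.
Import Order.TTheory GRing.Theory Num.Theory.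
Local Open Scope ring_scope.
Set Implicit Arguments. Unset Strict Implicit.

Section H.
Variable C : numClosedFieldType.

Lemma ctmxK p q (A : 'M[C]_(p,q)) : ctmx (ctmx A) = A.
Proof. by apply/matrixP => i j; rewrite /ctmx !mxE conjCK. Qed.

Lemma ctmxM p q r (A : 'M[C]_(p,q)) (B : 'M[C]_(q,r)) :
  ctmx (A *m B) = ctmx B *m ctmx A.
Proof. by rewrite /ctmx map_mxM trmx_mul. Qed.

Lemma ctmxB p q (A B : 'M[C]_(p,q)) : ctmx (A - B) = ctmx A - ctmx B.
Proof. by rewrite /ctmx map_mxB linearB. Qed.

Lemma ctmxD p q (A B : 'M[C]_(p,q)) : ctmx (A + B) = ctmx A + ctmx B.
Proof. by rewrite /ctmx map_mxD linearD. Qed.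

Lemma ctmxN p q (A : 'M[C]_(p,q)) : ctmx (- A) = - ctmx A.
Proof. by rewrite /ctmx map_mxN linearN. Qed.

Lemma ctmx1 p : ctmx (1%:M : 'M[C]_p) = 1%:M.
Proof. by rewrite /ctmx map_mx1 trmx1. Qed.

Lemma ctmx0 p q : ctmx (0 : 'M[C]_(p,q)) = 0.
Proof. by rewrite /ctmx map_mx0 trmx0. Qed.

Lemma ctmx_tens p q r s (A : 'M[C]_(p,q)) (B : 'M[C]_(r,s)) :
  ctmx (A *t B) = ctmx A *t ctmx B.
Proof. by rewrite /ctmx map_mxT trmx_tens. Qed.

Definition qf p (x : 'cV[C]_p) := (ctmx x *m x) 0 0.

Lemma qfE p (x : 'cV[C]_p) : qf x = \sum_i x i 0 * (x i 0)^*.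
Proof. by rewrite /qf mxE; apply: eq_bigr => i _; rewrite /ctmx !mxE mulrC. Qed.

Lemma qf_ge0 p (x : 'cV[C]_p) : 0 <= qf x.
Proof. by rewrite qfE; apply: sumr_ge0 => i _; apply: mul_conjC_ge0. Qed.

Lemma qf_eq0 p (x : 'cV[C]_p) : qf x = 0 -> x = 0.
Proof.
rewrite qfE => /psumr_eq0P H; apply/matrixP => i j.
rewrite [j]ord1 mxE; apply/eqP; rewrite -mul_conjC_eq0; apply/eqP.
by apply: H => // k _; apply: mul_conjC_ge0.
Qed.

Lemma qfD p (x y : 'cV[C]_p) : ctmx x *m y = 0 -> qf (x + y) = qf x + qf y.
Proof.
move=> H; have H' : ctmx y *m x = 0 by rewrite -[x]ctmxK -ctmxM H ctmx0.
rewrite /qf ctmxD mulmxDl !mulmxDr H H' addr0 add0r addrC mxE.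
by rewrite addrC.

Qed.

Lemma qfN p (x : 'cV[C]_p) : qf (- x) = qf x.
Proof. by rewrite /qf ctmxN mulNmx mulmxN opprK. Qed.

Lemma mul_ct_eq0 p q (W : 'M[C]_(p,q)) : W *m ctmx W = 0 -> W = 0.
Proof.
move=> H; apply/matrixP => i j; rewrite mxE.
have /matrixP /(_ i i) := H; rewrite !mxE => /psumr_eq0P H2.
apply/eqP; rewrite -mul_conjC_eq0; apply/eqP.
have := H2 _ j isT; rewrite /ctmx !mxE; apply => k _; rewrite /ctmx !mxE.
exact: mul_conjC_ge0.
Qed.


Lemma free_unit r q (W : 'M[C]_(r,q)) : row_free W -> W *m ctmx W \in unitmx.
Proof.
move=> fW; rewrite -row_free_unit -kermx_eq0; apply/eqP.
set U := kermx _.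
have H : (U *m W) *m ctmx (U *m W) = 0.
  by rewrite ctmxM !mulmxA -(mulmxA U) mulmx_ker !mul0mx.
by apply/eqP; rewrite -(mulmx_free_eq0 _ fW); apply/eqP; apply: mul_ct_eq0.
Qed.

Lemma ct_unit p (K : 'M[C]_p) : K \in unitmx -> ctmx K \in unitmx.
Proof.
move=> uK; have : ctmx K *m ctmx (invmx K) = 1%:M by rewrite -ctmxM mulVmx // ctmx1.
by case/mulmx1_unit.
Qed.

Lemma herm_inv p (K : 'M[C]_p) : ctmx K = K -> K \in unitmx ->
  ctmx (invmx K) = invmx K.
Proof.
move=> hK uK.
have E : ctmx (invmx K) *m K = 1%:M by rewrite -{2}hK -ctmxM mulmxV // ctmx1.
by rewrite -[ctmx _]mulmx1 -(mulmxV uK) mulmxA E mul1mx.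
Qed.

Lemma penrose_fact p q r (B : 'M[C]_(p,r)) (Cm : 'M[C]_(r,q)) :
  row_free (ctmx B) -> row_free Cm -> exists X, penrose (B *m Cm) X.
Proof.
move=> fB fC.
have u1 := free_unit fC; have u2 := free_unit fB.
rewrite ctmxK in u2.
set K1 := Cm *m ctmx Cm in u1 *; set K2 := ctmx B *m B in u2 *.
have h1 : ctmx K1 = K1 by rewrite /K1 ctmxM ctmxK.
have h2 : ctmx K2 = K2 by rewrite /K2 ctmxM ctmxK.
exists (ctmx Cm *m invmx K1 *m invmx K2 *m ctmx B).
have AX : B *m Cm *m (ctmx Cm *m invmx K1 *m invmx K2 *m ctmx B) =
          B *m invmx K2 *m ctmx B.
  by rewrite !mulmxA -(mulmxA B Cm) -/K1 -(mulmxA B K1 (invmx K1)) mulmxV // mulmx1.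
have XA : (ctmx Cm *m invmx K1 *m invmx K2 *m ctmx B) *m (B *m Cm) =
          ctmx Cm *m invmx K1 *m Cm.
  by rewrite !mulmxA -(mulmxA _ (ctmx B) B) -/K2 -(mulmxA _ (invmx K2) K2) mulVmx // mulmx1.
split.
- by rewrite AX !mulmxA -(mulmxA _ (ctmx B) B) -/K2 -(mulmxA _ (invmx K2) K2) mulVmx // mulmx1.
- rewrite XA !mulmxA -(mulmxA _ Cm (ctmx Cm)) -/K1 -(mulmxA _ K1 (invmx K1)) mulmxV // mulmx1.
  by [].
- by rewrite AX !ctmxM ctmxK herm_inv // mulmxA.
- by rewrite XA !ctmxM ctmxK herm_inv // mulmxA.
Qed.

Lemma penrose_ex p q (A : 'M[C]_(p,q)) : exists X, penrose A X.
Proof.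
have := @penrose_fact _ _ _ (col_base A) (row_base A).
rewrite mulmx_base; apply; last exact: row_base_free.
rewrite /row_free /ctmx mxrank_tr mxrank_map.
by have := col_base_full A; rewrite /row_full.
Qed.

Lemma pinvP p q (A : 'M[C]_(p,q)) : penrose A (pinv A).
Proof. rewrite /pinv; apply: epsilon_spec; exact: penrose_ex. Qed.


Lemma ls_min N k (D : 'M[C]_(N,k)) X (h : 'cV[C]_N) : penrose D X ->
  (forall b, qf (h - D *m (X *m h)) <= qf (h - D *m b)) /\
  (forall b, (forall c, qf (h - D *m b) <= qf (h - D *m c)) ->
     qf (X *m h) <= qf b).
Proof.
case=> P1 P2 P3 P4.
set u := h - D *m (X *m h).
have P1' : forall v : 'cV_k, D *m (X *m (D *m v)) = D *m v by move=> v; rewrite !mulmxA P1.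
have orth : forall v : 'cV_k, ctmx u *m (D *m v) = 0.
  move=> v; rewrite /u ctmxB (mulmxA D X h) ctmxM P3 mulmxBl -!mulmxA P1' subrr //.
have spl : forall b, h - D *m b = u + D *m (X *m h - b).
  by move=> b; rewrite /u mulmxBr addrA subrK.
split.
  by move=> b; rewrite spl qfD // lerDl qf_ge0.
move=> b Hb; have := Hb (X *m h); rewrite spl qfD // => H.
have Dv : D *m (X *m h - b) = 0.
  apply: qf_eq0; apply/eqP; rewrite eq_le qf_ge0 andbT.
  by rewrite -(lerD2l (qf u)) addr0.
have eb : b = X *m h + - (X *m h - b) by rewrite opprB addrC subrK.
rewrite eb qfD ?lerDl ?qf_ge0 //.
rewrite mulmxN; apply/eqP; rewrite oppr_eq0; apply/eqP.
rewrite -[Y in ctmx (Y *m h)]P2 ctmxM (ctmxM (X *m D) X) P4 -!mulmxA Dv !mulmx0 //.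
Qed.


Lemma tens11 k p : (1%:M : 'M[C]_k) *t (1%:M : 'M[C]_p) = 1%:M.
Proof.
apply/matrixP => i j.
case: (mxtens_indexP i) => a b; case: (mxtens_indexP j) => c d.
rewrite tensmxE !mxE (can_eq (@mxtens_indexK k p)) xpair_eqE -natrM mulnb //.
Qed.

Lemma sum_tens k p (G : 'I_(k * p) -> C) :
  \sum_t G t = \sum_(a < k) \sum_(b < p) G (mxtens_index (a, b)).
Proof.
rewrite (reindex (@mxtens_index k p)) /=; last first.
  by exists (@mxtens_unindex k p) => t _; [apply: mxtens_indexK | apply: mxtens_unindexK].
rewrite pair_big /=; apply: eq_bigr => -[a b] _ //.
Qed.

Lemma stackmxE k p q (F : 'I_k -> 'M[C]_(p,q)) a b c :
  stackmx F (mxtens_index (a, b)) c = F a b c.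
Proof. by rewrite /stackmx mxE mxtens_indexK. Qed.

Lemma tens1_stack k p' p q (K : 'M[C]_(p',p)) (F : 'I_k -> 'M[C]_(p,q)) :
  ((1%:M : 'M[C]_k) *t K) *m stackmx F = stackmx (fun i => K *m F i).
Proof.
apply/matrixP => i j; case: (mxtens_indexP i) => a b.
rewrite stackmxE mxE sum_tens (bigD1 a) //= [X in _ + X]big1 ?addr0.
  by rewrite mxE; apply: eq_bigr => y _; rewrite tensmxE stackmxE mxE eqxx mul1r.
move=> a' ne; apply: big1 => y _; rewrite tensmxE mxE eq_sym (negbTE ne).
by rewrite !mul0r.
Qed.

End H.

(* Indices are 0-based: f i = A^i f_1 is the paper's f_{i+1},
   Delta i = diag(lambda_j ^ i) is the paper's Delta_{Lambda_{i+1}}. *)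
Theorem proposition5p1 (C : numClosedFieldType) (n l m : nat)
  (A : 'M[C]_n) (f1 : 'cV[C]_n)
  (Z Q : 'M[C]_(n, l)) (R : 'M[C]_l) (lambda : 'I_l -> C) :
  \rank Z = l ->
  Z = Q *m R ->
  ctmx Q *m Q = 1%:M ->
  (forall i j : 'I_l, (j < i)%N -> R i j = 0) ->
  R \in unitmx ->
  let f := fun i : 'I_m => A ^+ i *m f1 in
  let g := fun i : 'I_m => ctmx Q *m f i in
  let Delta := fun i : 'I_m => diag_mx (\row_(j < l) lambda j ^+ i) in
  let gvec := stackmx g in
  let S := stackmx (fun i : 'I_m => R *m Delta i) in
  let alpha_star :=
    pinv (stackmx Delta) *m ((1%:M : 'M[C]_m) *t invmx R *m gvec) in
  let M := (1%:M : 'M[C]_m) *t invmx (R *m ctmx R) in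
  min_norm_wls_sol M S gvec alpha_star.
Proof.
Proof.
move=> _ _ _ _ uR f g Delta gvec S alpha_star M.
rewrite /min_norm_wls_sol /alpha_star.
set D := stackmx Delta.
set T := (1%:M : 'M[C]_m) *t R.
set h := (1%:M : 'M[C]_m) *t invmx R *m gvec.
have eS : S = T *m D by rewrite /T tens1_stack.
have eg : T *m h = gvec.
  by rewrite /h mulmxA tensmx_mul mulmx1 mulmxV // tens11 mul1mx.
have uK : R *m ctmx R \in unitmx by rewrite unitmx_mul uR ct_unit.
have E : ctmx R *m invmx (R *m ctmx R) *m R = 1%:M.
  have E1 : R *m (ctmx R *m invmx (R *m ctmx R) *m R) = R.
    by rewrite !mulmxA mulmxV // mul1mx.
  by rewrite -[LHS]mul1mx -{1}(mulVmx uR) -(mulmxA (invmx R) R) E1 mulVmx.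
have eT : ctmx T *m M *m T = 1%:M.
  by rewrite /T /M ctmx_tens ctmx1 !tensmx_mul !mul1mx E tens11.
have key : forall b, wnorm M (gvec - S *m b) = sqrtC (qf (h - D *m b)).
  move=> b; rewrite /wnorm eS -eg -(mulmxA T D b) -mulmxBr ctmxM /qf.
  congr (sqrtC (_ 0 0)).
  by rewrite !mulmxA -(mulmxA _ (ctmx T) M) -(mulmxA _ (ctmx T *m M) T) eT mulmx1.
have key2 : forall b : 'cV[C]_l, norm2 b = sqrtC (qf b) by [].
have [L1 L2] := ls_min h (pinvP D).
split.
  by move=> b; rewrite !key ler_sqrtC ?nnegrE ?qf_ge0 //; exact: L1.
move=> b Hb; rewrite !key2 ler_sqrtC ?nnegrE ?qf_ge0 //; apply: L2 => c.
by have := Hb c; rewrite !key ler_sqrtC ?nnegrE ?qf_ge0.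
Qed.
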